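(* Assume the Axiom of Choice. Let $X,Y$ be nonempty sets and $F\colon X^*\to Y$ a function. Suppose there exist an associative $\varepsilon$-standard operation $H\colon X^*\to X\cup\{\varepsilon\}$ and a one-to-one function $f\colon\mathrm{ran}(H^{\flat})\to Y$ such that $F^{\flat}=f\circ H^{\flat}$. Then the following are equivalent: (i) $F_1$ is one-to-one; (ii) $H_1$ is one-to-one; (iii) $H_1$ is the identity map on $X$.
   Context: $X^*=\bigcup_{n\geqslant 0}X^n$ is the set of finite tuples over $X$, $X^0=\{\varepsilon\}$ with $\varepsilon\notin X$ the empty tuple; concatenation with $\varepsilon$ leaves tuples unchanged. $F_n=F|_{X^n}$, $F^{\flat}=F|_{X^*\setminus\{\varepsilon\}}$. An operation $H\colon X^*\to X\cup\{\varepsilon\}$ is $\varepsilon$-standard if $H(\varepsilon)=\varepsilon$ and $H(\mathbf{x})=\varepsilon$ only for $\mathbf{x}=\varepsilon$. $H$ is associative if $H(\mathbf{x},\mathbf{y},\mathbf{z})=H(\mathbf{x},H(\mathbf{y}),\mathbf{z})$ for all $\mathbf{x},\mathbf{y},\mathbf{z}\in X^*$ (arguments denote concatenation; a value $\varepsilon$ is treated as the empty tuple). *)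

(* Defs.v *)
(* X^* is modelled as [list X]; X ∪ {ε} as [option X]
   with [None] playing the role of ε. *)
From Stdlib Require Export List.
Export ListNotations.

Definition otup {X : Type} (o : option X) : list X :=
  match o with Some a => [a] | None => [] end.

Definition eps_standard {X : Type} (H : list X -> option X) : Prop :=
  H [] = None /\ (forall x, H x = None -> x = []).

Definition associative_op {X : Type} (H : list X -> option X) : Prop :=
  forall x y z : list X, H (x ++ y ++ z) = H (x ++ otup (H y) ++ z).

Definition ran_flat {X : Type} (H : list X -> option X) (a : X) : Prop :=
  exists x, x <> [] /\ H x = Some a.

(* Main.v *)
Require Import Defs.
From Stdlib Require Import ProofIrrelevance.

Theorem proposition4p4 (X Y : Type) (HX : inhabited X) (HY : inhabited Y)
  (F : list X -> Y) (H : list X -> option X) (f : sig (ran_flat H) -> Y)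
  (Hstd : eps_standard H) (Hassoc : associative_op H)
  (finj : forall a b : sig (ran_flat H), f a = f b -> a = b)
  (Hfact : forall (x : list X) (a : X) (hx : x <> []) (ha : H x = Some a),
      F x = f (exist (ran_flat H) a (ex_intro _ x (conj hx ha)))) :
  ((forall a b : X, F [a] = F [b] -> a = b) <->
   (forall a b : X, H [a] = H [b] -> a = b)) /\
  ((forall a b : X, H [a] = H [b] -> a = b) <->
   (forall a : X, H [a] = Some a)).
Proof.
  destruct Hstd as [H0 Hne].
  assert (Hs : forall a, exists b, H [a] = Some b).
  { intro a. destruct (H [a]) as [b|] eqn:E; [eauto|].
    apply Hne in E; discriminate. }
  assert (nn : forall a : X, [a] <> []) by discriminate.
  assert (Fv : forall a b (e : H [a] = Some b), F [a] = f (exist _ b (ex_intro _ [a] (conj (nn a) e)))).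
  { intros. apply Hfact. }
  split; split.
  - intros Fi a b E. apply Fi.
    destruct (Hs a) as [c Ec]. assert (Ed : H [b] = Some c) by congruence.
    rewrite (Fv a c Ec), (Fv b c Ed). apply f_equal. apply f_equal. apply proof_irrelevance.
  - intros Hi a b E. apply Hi.
    destruct (Hs a) as [c Ec]. destruct (Hs b) as [d Ed].
    rewrite (Fv a c Ec), (Fv b d Ed) in E. apply finj in E.
    inversion E; subst. congruence.
  - intros Hi a. destruct (Hs a) as [b Eb].
    pose proof (Hassoc [] [a] []) as A. simpl in A. rewrite Eb in A. simpl in A.
    rewrite Eb. f_equal. symmetry. apply Hi. congruence.
  - intros Hid a b E. rewrite !Hid in E. congruence.
Qed.
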